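(* Consider the system $\dot x=-\nabla\psi(x)+Jx+Bu$, $y=Cx+\rho(u)$ on $\mathbb R^n$, where $\psi:\mathbb R^n\to\mathbb R$ is continuously differentiable and strictly convex with $\lim_{\|x\|\to\infty}\psi(x)/\|x\|=\infty$, $J$ is skew-symmetric, $B,C\in\mathbb R^{n\times n}$ are invertible, and $\rho:\mathbb R^n\to\mathbb R^n$. Let $\Phi:\mathbb R^n\to\mathbb R^n$ be the inverse of the map $y\mapsto B^{-1}\nabla\psi(C^{-1}y)-B^{-1}JC^{-1}y$. If $\Phi+\rho$ is the gradient of a (differentiable) convex function, then the steady-state input-output relation of the system is cyclically monotone; if $\Phi+\rho$ is the gradient of a strictly convex function, then the steady-state input-output relation is strictly cyclically monotone.
   Context: The steady-state input-output relation of the system is the set of pairs $(\mathrm u,\mathrm y)\in\mathbb R^n\times\mathbb R^n$ such that there is $\mathrm x$ with $-\nabla\psi(\mathrm x)+J\mathrm x+B\mathrm u=0$ and $\mathrm y=C\mathrm x+\rho(\mathrm u)$. (Under the hypotheses the map $x\mapsto\nabla\psi(x)-Jx$ is a bijection of $\mathbb R^n$, so $\Phi$ is well defined.) A relation $R\subseteq\mathbb R^n\times\mathbb R^n$ is cyclically monotone if for every $N\ge1$ and $(u_1,y_1),\dots,(u_N,y_N)\in R$, $\sum_{i=1}^Ny_i^T(u_i-u_{i-1})\ge0$ with $u_0=u_N$; strictly cyclically monotone if this inequality is strict whenever at least two of the $u_i$ are distinct. *)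

(* Defs.v *)
From Stdlib Require Import Reals.
From mathcomp Require Import ssreflect ssrfun ssrbool eqtype ssrnat seq fintype bigop.

Set Implicit Arguments.
Unset Strict Implicit.
Unset Printing Implicit Defensive.

Local Open Scope R_scope.

Definition vec (n : nat) := 'I_n -> R.
Definition mat (n : nat) := 'I_n -> 'I_n -> R.

Definition vzero {n} : vec n := fun _ => 0.
Definition vadd {n} (u v : vec n) : vec n := fun i => u i + v i.
Definition vopp {n} (u : vec n) : vec n := fun i => - u i.
Definition vsub {n} (u v : vec n) : vec n := fun i => u i - v i.
Definition vscale {n} (a : R) (u : vec n) : vec n := fun i => a * u i.

Definition dot {n} (u v : vec n) : R := \big[Rplus/0]_(i < n) (u i * v i).
Definition vnorm {n} (u : vec n) : R := sqrt (dot u u).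

Definition mv {n} (A : mat n) (x : vec n) : vec n :=
  fun i => \big[Rplus/0]_(j < n) (A i j * x j).

Definition skew_symmetric {n} (J : mat n) : Prop :=
  forall i j, J i j = - J j i.

Definition is_inverse_mat {n} (A Ainv : mat n) : Prop :=
  (forall x, mv A (mv Ainv x) = x) /\ (forall x, mv Ainv (mv A x) = x).

Definition invertible_mat {n} (A : mat n) : Prop :=
  exists Ainv, is_inverse_mat A Ainv.

Definition has_gradient_at {n} (f : vec n -> R) (g : vec n) (x : vec n) : Prop :=
  forall eps, 0 < eps -> exists delta, 0 < delta /\
    forall h : vec n, vnorm h < delta ->
      Rabs (f (vadd x h) - f x - dot g h) <= eps * vnorm h.

Definition is_gradient {n} (f : vec n -> R) (gradf : vec n -> vec n) : Prop :=
  forall x, has_gradient_at f (gradf x) x.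

Definition continuous_vec {n} (F : vec n -> vec n) : Prop :=
  forall x eps, 0 < eps -> exists delta, 0 < delta /\
    forall z, vnorm (vsub z x) < delta -> vnorm (vsub (F z) (F x)) < eps.

Definition convex_fun {n} (f : vec n -> R) : Prop :=
  forall x y t, 0 <= t <= 1 ->
    f (vadd (vscale t x) (vscale (1 - t) y)) <= t * f x + (1 - t) * f y.

Definition strictly_convex_fun {n} (f : vec n -> R) : Prop :=
  forall x y t, x <> y -> 0 < t < 1 ->
    f (vadd (vscale t x) (vscale (1 - t) y)) < t * f x + (1 - t) * f y.

Definition superlinear {n} (f : vec n -> R) : Prop :=
  forall M, exists r, forall x, r < vnorm x -> M * vnorm x < f x.

(* Steady-state input-output relation of
   xdot = -gradpsi x + J x + B u,  y = C x + rho u. *)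
Definition steady_state_io {n} (gradpsi : vec n -> vec n) (J B C : mat n)
    (rho : vec n -> vec n) (u y : vec n) : Prop :=
  exists x : vec n,
    vadd (vadd (vopp (gradpsi x)) (mv J x)) (mv B u) = vzero /\
    y = vadd (mv C x) (rho u).

Definition cyclically_monotone {n} (Rel : vec n -> vec n -> Prop) : Prop :=
  forall (N : nat) (us ys : nat -> vec n),
    (1 <= N)%N -> us 0%N = us N ->
    (forall i, (1 <= i <= N)%N -> Rel (us i) (ys i)) ->
    0 <= \big[Rplus/0]_(1 <= i < N.+1) dot (ys i) (vsub (us i) (us i.-1)).

Definition strictly_cyclically_monotone {n} (Rel : vec n -> vec n -> Prop) : Prop :=
  forall (N : nat) (us ys : nat -> vec n),
    (1 <= N)%N -> us 0%N = us N ->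
    (forall i, (1 <= i <= N)%N -> Rel (us i) (ys i)) ->
    (exists i j, (1 <= i <= N)%N /\ (1 <= j <= N)%N /\ us i <> us j) ->
    0 < \big[Rplus/0]_(1 <= i < N.+1) dot (ys i) (vsub (us i) (us i.-1)).

(* Main.v *)
Require Import Defs.
From Stdlib Require Import Reals.
From mathcomp Require Import ssreflect ssrfun ssrbool eqtype ssrnat seq fintype bigop.
From Stdlib Require Import Lra FunctionalExtensionality Classical.
Local Open Scope R_scope.

Lemma sum_scale (n : nat) (F G : 'I_n -> R) c :
  (forall i, F i = c * G i) ->
  \big[Rplus/0]_(i < n) F i = c * \big[Rplus/0]_(i < n) G i.
Proof.
move=> H.
apply: (big_rec2 (fun a b => a = c * b)); first by ring.
move=> i a b _ ->; rewrite H; ring.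
Qed.

Lemma sum_sub (n : nat) (F G K : 'I_n -> R) :
  (forall i, F i = G i - K i) ->
  \big[Rplus/0]_(i < n) F i = \big[Rplus/0]_(i < n) G i - \big[Rplus/0]_(i < n) K i.
Proof.
move=> H.
apply: (big_rec3 (fun a b c => a = b - c)); first by ring.
move=> i a b c _ ->; rewrite H; ring.
Qed.

Lemma sum_nonneg (n : nat) (F : 'I_n -> R) :
  (forall i, 0 <= F i) -> 0 <= \big[Rplus/0]_(i < n) F i.
Proof.
move=> H; apply: (big_ind (fun a => 0 <= a)); [lra| move=> x y; lra | move=> i _; apply H].
Qed.

Lemma dot_scale n (g h : vec n) t : dot g (vscale t h) = t * dot g h.
Proof. rewrite /dot; apply: sum_scale => i; rewrite /vscale; ring. Qed.

Lemma vnorm_scale n (h : vec n) t : 0 <= t -> vnorm (vscale t h) = t * vnorm h.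
Proof.
move=> Ht; rewrite /vnorm.
have -> : dot (vscale t h) (vscale t h) = (t * t) * dot h h.
  rewrite /dot; apply: sum_scale => i; rewrite /vscale; ring.
rewrite sqrt_mult; first by rewrite sqrt_square.
- nra.
- by apply: sum_nonneg => i; nra.
Qed.

Lemma vnorm_ge0 n (h : vec n) : 0 <= vnorm h.
Proof. apply: sqrt_pos. Qed.
Arguments vnorm_ge0 {n} h.

Lemma grad_ineq n (f : vec n -> R) g u v :
  convex_fun f -> has_gradient_at f g u -> dot g (vsub v u) <= f v - f u.
Proof.
move=> Hc Hg.
set h := vsub v u.
apply: Rnot_gt_le => Hlt.
set d := dot g h - (f v - f u).
have hn := vnorm_ge0 h.
have Hd : 0 < d by rewrite /d; lra.
set eps := d / (2 * (vnorm h + 1)).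
have Heps : 0 < eps by rewrite /eps; apply: Rdiv_lt_0_compat; lra.
have [delta [Hdel Hf]] := Hg eps Heps.
set t := Rmin 1 (delta / (2 * (vnorm h + 1))).
have Ht0 : 0 < t.
  rewrite /t; apply: Rmin_glb_lt; first lra.
  apply: Rdiv_lt_0_compat; lra.
have Ht1 : t <= 1 by apply: Rmin_l.
have Ht2 : t <= delta / (2 * (vnorm h + 1)) by apply: Rmin_r.
have Hnt : vnorm (vscale t h) < delta.
  rewrite vnorm_scale; last lra.
  have : t * (2 * (vnorm h + 1)) <= delta.
    have := Rmult_le_compat_r (2 * (vnorm h + 1)) _ _ ltac:(lra) Ht2.
    rewrite /Rdiv Rmult_assoc Rinv_l; lra.
  nra.
have := Hf _ Hnt.
rewrite dot_scale vnorm_scale; last lra.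
have Hconv := Hc v u t ltac:(lra).
have -> : vadd u (vscale t h) = vadd (vscale t v) (vscale (1 - t) u).
  apply: functional_extensionality => i; rewrite /vadd /vscale /h /vsub; ring.
move=> Ha; have H1 := Rle_trans _ _ _ (Rle_abs _) Ha; have H2 := Rle_trans _ _ _ (Rle_abs (- _)) (Rle_trans _ _ _ (Req_le _ _ (Rabs_Ropp _)) Ha).
have Hk : t * dot g h <= t * (f v - f u) + t * (eps * vnorm h) by lra.
have Hk2 : dot g h <= (f v - f u) + eps * vnorm h.
  apply: (Rmult_le_reg_l t); lra.
have : eps * vnorm h < d.
  have -> : eps * vnorm h = d * (vnorm h / (2 * (vnorm h + 1))) by rewrite /eps; field; lra.
  have : vnorm h / (2 * (vnorm h + 1)) < 1.
    apply: (Rmult_lt_reg_r (2 * (vnorm h + 1))); first lra.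
    rewrite /Rdiv Rmult_assoc Rinv_l; lra.
  move=> H3.
  have : 0 <= vnorm h / (2 * (vnorm h + 1)) by apply: Rmult_le_pos => //; apply: Rlt_le; apply: Rinv_0_lt_compat; lra.
  nra.
rewrite /d in Hk2 *; lra.
Qed.
Arguments grad_ineq {n f g u} v.

Lemma strict_convex n (f : vec n -> R) : strictly_convex_fun f -> convex_fun f.
Proof.
move=> Hs x y t Ht.
case: (classic (x = y)) => [->|Hxy].
  have -> : vadd (vscale t y) (vscale (1 - t) y) = y.
    apply: functional_extensionality => i; rewrite /vadd /vscale; ring.
  lra.
case: (Req_dec t 0) => [->|H0].
  have -> : vadd (vscale 0 x) (vscale (1 - 0) y) = y.
    apply: functional_extensionality => i; rewrite /vadd /vscale; ring.
  lra.
case: (Req_dec t 1) => [->|H1].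
  have -> : vadd (vscale 1 x) (vscale (1 - 1) y) = x.
    apply: functional_extensionality => i; rewrite /vadd /vscale; ring.
  lra.
apply: Rlt_le; apply: Hs => //; lra.
Qed.
Arguments strict_convex {n f}.

Lemma grad_ineq_strict n (f : vec n -> R) g u v :
  strictly_convex_fun f -> has_gradient_at f g u -> u <> v ->
  dot g (vsub v u) < f v - f u.
Proof.
move=> Hs Hg Huv.
set m := vadd (vscale (1/2) v) (vscale (1 - 1/2) u).
have H1 := grad_ineq m (strict_convex Hs) Hg.
have H2 := Hs v u (1/2) (nesym Huv) ltac:(lra).
have E : vsub m u = vscale (1/2) (vsub v u).
  apply: functional_extensionality => i; rewrite /m /vsub /vadd /vscale; field.
rewrite E in H1.
rewrite dot_scale in H1.
rewrite -/m in H2; lra.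
Qed.
Arguments grad_ineq_strict {n f g u v}.

Lemma sum_le (s : seq nat) (F G : nat -> R) :
  (forall i, i \in s -> F i <= G i) ->
  \big[Rplus/0]_(i <- s) F i <= \big[Rplus/0]_(i <- s) G i.
Proof.
elim: s => [|a s IH] H; first by rewrite !big_nil; lra.
rewrite !big_cons.
have := H a (mem_head _ _).
have : \big[Rplus/0]_(i <- s) F i <= \big[Rplus/0]_(i <- s) G i.
  by apply: IH => i Hi; apply: H; rewrite inE Hi orbT.
lra.
Qed.
Arguments sum_le {s F G}.

Lemma sum_lt (s : seq nat) (F G : nat -> R) :
  (forall i, i \in s -> F i <= G i) ->
  (exists i, i \in s /\ F i < G i) ->
  \big[Rplus/0]_(i <- s) F i < \big[Rplus/0]_(i <- s) G i.
Proof.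
elim: s => [|a s IH] H [k [Hk Hlt]]; first by rewrite in_nil in Hk.
rewrite !big_cons.
have Ha := H a (mem_head _ _).
have Hs : forall i, i \in s -> F i <= G i.
  by move=> i Hi; apply: H; rewrite inE Hi orbT.
move: Hk; rewrite inE => /orP [/eqP Eq|Hk].
  subst k; have := sum_le Hs; lra.
have := IH Hs (ex_intro _ k (conj Hk Hlt)); lra.
Qed.

Arguments sum_lt {s F G}.

Lemma telescope (g : nat -> R) N m :
  \big[Rplus/0]_(i <- iota m.+1 N) (g i - g i.-1) = g (m + N)%N - g m.
Proof.
elim: N m => [|N IH] m.
  by rewrite big_nil addn0; ring.
rewrite /= big_cons IH /= addnS -addSn; ring.
Qed.

Lemma mv_sub n (A : mat n) a b : mv A (vsub a b) = vsub (mv A a) (mv A b).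
Proof.
apply: functional_extensionality => i; rewrite /mv /vsub.
apply: sum_sub => j; ring.
Qed.

Theorem mainTheorem12 (n : nat) (psi : vec n -> R) (gradpsi : vec n -> vec n)
  (J B C Binv Cinv : mat n) (rho Phi : vec n -> vec n) :
  is_gradient psi gradpsi ->
  continuous_vec gradpsi ->
  strictly_convex_fun psi ->
  superlinear psi ->
  skew_symmetric J ->
  is_inverse_mat B Binv ->
  is_inverse_mat C Cinv ->
  (* Phi is the inverse of y |-> B^-1 gradpsi(C^-1 y) - B^-1 J C^-1 y *)
  (forall y, Phi (vsub (mv Binv (gradpsi (mv Cinv y))) (mv Binv (mv J (mv Cinv y)))) = y) ->
  (forall u, vsub (mv Binv (gradpsi (mv Cinv (Phi u)))) (mv Binv (mv J (mv Cinv (Phi u)))) = u) ->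
  ((exists f : vec n -> R, convex_fun f /\ is_gradient f (fun u => vadd (Phi u) (rho u))) ->
     cyclically_monotone (steady_state_io gradpsi J B C rho)) /\
  ((exists f : vec n -> R, strictly_convex_fun f /\ is_gradient f (fun u => vadd (Phi u) (rho u))) ->
     strictly_cyclically_monotone (steady_state_io gradpsi J B C rho)).
Proof.
move=> _ _ _ _ _ [_ HB] [_ HC] HPhi _.
have Hrel : forall u y, steady_state_io gradpsi J B C rho u y -> y = vadd (Phi u) (rho u).
  move=> u y [x [Hx ->]].
  have HBu : mv B u = vsub (gradpsi x) (mv J x).
    apply: functional_extensionality => i.
    have := equal_f Hx i; rewrite /vadd /vopp /vzero /vsub; lra.
  have Hu : u = vsub (mv Binv (gradpsi (mv Cinv (mv C x)))) (mv Binv (mv J (mv Cinv (mv C x)))).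
    by rewrite HC -mv_sub -HBu HB.
  by rewrite {2}Hu HPhi.
have Htel : forall (f : vec n -> R) N (us : nat -> vec n), us 0%N = us N ->
    \big[Rplus/0]_(1 <= i < N.+1) (f (us i) - f (us i.-1)) = 0.
  move=> f N us E.
  rewrite /index_iota subSS subn0.
  rewrite (telescope (fun i => f (us i)) N 0) add0n E; ring.
split.
- move=> [f [Hf Hg]] N us ys HN E Hr.
  apply: (Rle_trans _ _ _ (Req_le _ _ (esym (Htel f N us E)))).
  apply: (sum_le (F := fun i => f (us i) - f (us i.-1))) => i; rewrite mem_iota => /andP [H1 H2].
  have Hi : (1 <= i <= N)%N by apply/andP; split => //; move: H2; rewrite subSS subn0 add1n ltnS.
  rewrite (Hrel _ _ (Hr i Hi)).
  have := grad_ineq (us i.-1) Hf (Hg (us i)).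
  have -> : vsub (us i.-1) (us i) = vscale (-1) (vsub (us i) (us i.-1)).
    apply: functional_extensionality => k; rewrite /vsub /vscale; ring.
  rewrite dot_scale; lra.
- move=> [f [Hf Hg]] N us ys HN E Hr [i0 [j0 [Hi0 [Hj0 Hne]]]].
  apply: (Rle_lt_trans _ _ _ (Req_le _ _ (esym (Htel f N us E)))).
  have Hf' := strict_convex Hf.
  have [k [Hk Hkne]] : exists k, (1 <= k <= N)%N /\ us k <> us k.-1.
    apply: NNPP => Hno.
    have Hall : forall k, (k <= N)%N -> us k = us 0%N.
      elim=> [|k IH] Hk //.
      have : us k.+1 = us k.+1.-1.
        apply: NNPP => Hne'; apply: Hno; exists k.+1; split => //.
      move=> ->; apply: IH; exact: ltnW.
    apply: Hne; move/andP: Hi0 => [_ Hi]; move/andP: Hj0 => [_ Hj].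
    by rewrite (Hall _ Hi) (Hall _ Hj).
  apply: (sum_lt (F := fun i => f (us i) - f (us i.-1))).
  + move=> i; rewrite mem_iota => /andP [H1 H2].
    have Hi : (1 <= i <= N)%N by apply/andP; split => //; move: H2; rewrite subSS subn0 add1n ltnS.
  rewrite (Hrel _ _ (Hr i Hi)).
    have := grad_ineq (us i.-1) Hf' (Hg (us i)).
    have -> : vsub (us i.-1) (us i) = vscale (-1) (vsub (us i) (us i.-1)).
      apply: functional_extensionality => k'; rewrite /vsub /vscale; ring.
    rewrite dot_scale; lra.
  + exists k; split.
      rewrite mem_iota; move/andP: Hk => [H1 H2]; apply/andP; split => //.
      by rewrite subSS subn0 add1n ltnS.
    rewrite (Hrel _ _ (Hr k Hk)).
    have := grad_ineq_strict Hf (Hg (us k)) Hkne.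
    have -> : vsub (us k.-1) (us k) = vscale (-1) (vsub (us k) (us k.-1)).
      apply: functional_extensionality => k'; rewrite /vsub /vscale; ring.
    rewrite dot_scale; lra.
Qed.
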